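(* For every finite strictly binary tree $T$ there exists an ultrametric space $(X,d)\in\mathfrak U$ such that the graphs $T$ and $\overline{T}_X$ are isomorphic.
   Context: $\operatorname{Sp}(X)=\{d(x,y):x\neq y\}$; $\mathfrak U$ is the class of finite ultrametric spaces $X$ with $|\operatorname{Sp}(X)|=|X|-1$. A strictly binary tree is a rooted tree whose root is adjacent to exactly two nodes and whose non-root non-leaf nodes are adjacent to exactly three nodes (a one-node tree counts as strictly binary). For a finite ultrametric space $X$ (with $X\cap\operatorname{Sp}(X)=\varnothing$), the representing tree $T_X$ is the labelled rooted tree defined recursively: for $X=\{x\}$ it is a single node labelled $x$; for $|X|\ge2$ the root is labelled $\operatorname{diam}X$ and has one child for each class $X_i$ of the equivalence relation $x\sim y\iff d(x,y)<\operatorname{diam}X$, that child being labelled $x$ if $X_i=\{x\}$ and otherwise labelled $\operatorname{diam}X_i$ and carrying the recursively constructed tree for $X_i$. $\overline{T}_X$ is the rooted tree obtained from $T_X$ by forgetting the labels. *)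

(* Defs.v *)
From HB Require Import structures.
From mathcomp Require Import all_boot all_order all_algebra.
From mathcomp Require Import reals.
Set Implicit Arguments. Unset Strict Implicit. Unset Printing Implicit Defensive.
Import Order.TTheory GRing.Theory Num.Theory.
Local Open Scope ring_scope.

Section Ultra.
Variables (R : realType) (X : finType) (d : X -> X -> R).

Definition is_ultrametric : Prop :=
  [/\ forall x y, 0 <= d x y,
      forall x y, d x y = 0 <-> x = y,
      forall x y, d x y = d y x &
      forall x y z, d x z <= Num.max (d x y) (d y z)].

Definition Sp : seq R :=
  undup [seq d p.1 p.2 | p <- enum [pred p : X * X | p.1 != p.2]].

Definition in_U : Prop :=
  [/\ is_ultrametric, (0 < #|X|)%N & size Sp = (#|X| - 1)%N].

Definition diam (B : {set X}) : R :=
  \big[Num.max/0]_(p in setX B B) d p.1 p.2.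

(* C is a child of B in the representing tree: |B| >= 2 and C is a class
   of the relation x ~ y <-> d(x,y) < diam B on B *)
Definition rt_child (B C : {set X}) : bool :=
  (1 < #|B|)%N && [exists x in B, C == [set y in B | d x y < diam B]].

(* nodes of T_X: X itself and, recursively, the classes of nodes *)
Definition rt_node (B : {set X}) : bool := connect rt_child [set: X] B.

Definition rt_edge (B C : {set X}) : bool := rt_child B C || rt_child C B.
End Ultra.

Section Trees.
Variables (V : finType) (e : rel V).

Definition simple_graph : Prop := symmetric e /\ irreflexive e.
Definition connected : Prop := forall x y, connect e x y.
Definition acyclic : Prop :=
  ~ exists s : seq V, [&& (2 < size s)%N, uniq s & cycle e s].
Definition is_tree : Prop := [/\ simple_graph, connected & acyclic].

Definition deg (v : V) : nat := #|[set w | e v w]|.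

(* rooted tree with root r; one-node tree counts as strictly binary *)
Definition strictly_binary_tree (r : V) : Prop :=
  is_tree /\
  (#|V| = 1%N \/
   (deg r = 2%N /\ forall v, v != r -> deg v = 1%N \/ deg v = 3%N)).
End Trees.

Definition iso_rep_tree (V : finType) (e : rel V) (R : realType) (X : finType)
    (d : X -> X -> R) : Prop :=
  exists f : V -> {set X},
    [/\ injective f,
        (forall B, rt_node d B <-> (exists v, f v = B)) &
        forall u v, e u v = rt_edge d (f u) (f v)].

(* Main.v *)
Require Import Defs.
From HB Require Import structures.
From mathcomp Require Import all_boot all_order all_algebra.
From mathcomp Require Import reals.
From mathcomp Require Import zify.
Set Implicit Arguments. Unset Strict Implicit. Unset Printing Implicit Defensive.
Import Order.TTheory GRing.Theory Num.Theory.

Section TreeFacts.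
Variables (V : finType) (e : rel V) (r : V).
Hypotheses (esy : symmetric e) (eirr : irreflexive e)
  (econ : forall x y, connect e x y) (eacyc : acyclic e).

Definition reach n v := [exists s : n.-tuple V, path e r s && (last r s == v)].

Lemma reachP n v : reflect (exists s, [/\ size s = n, path e r s & last r s = v])
  (reach n v).
Proof.
apply: (iffP existsP) => [[s /andP[p /eqP l]] | [s [sz p l]]].
  by exists (val s); rewrite size_tuple.
have t : size s == n by rewrite sz.
by exists (Tuple t); rewrite /= p l eqxx.
Qed.

Lemma reach_ex v : exists n, reach n v.
Proof.
have /connectP [s p l] := econ r v.
by exists (size s); apply/reachP; exists s.
Qed.

Definition dist v := ex_minn (reach_ex v).

Lemma dist_min v s : path e r s -> last r s = v -> dist v <= size s.
Proof.
move=> p l; rewrite /dist; case: ex_minnP => m _ H; apply: H.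
by apply/reachP; exists s.
Qed.

Lemma dist_path v : exists s, [/\ size s = dist v, path e r s & last r s = v].
Proof. by rewrite /dist; case: ex_minnP => m /reachP. Qed.

Lemma dist_r : dist r = 0.
Proof. by apply/eqP; rewrite -leqn0 (@dist_min r [::]). Qed.

Lemma dist0 v : dist v = 0 -> v = r.
Proof. by have [s [sz p l]] := dist_path v => H; move: sz; rewrite H => /size0nil Hs; rewrite -l Hs. Qed.

Lemma dist_edge u v : e u v -> dist v <= (dist u).+1.
Proof.
move=> huv; have [s [sz p l]] := dist_path u.
have := @dist_min v (rcons s v); rewrite size_rcons sz last_rcons; apply => //.
by rewrite rcons_path p l.
Qed.

Lemma dist_par_ex v : v != r -> exists2 p, e p v & (dist p).+1 = dist v.
Proof.
move=> vr; have [s [sz p l]] := dist_path v.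
case/lastP: s sz p l => [|s x] sz p l; first by rewrite /= in l; rewrite l eqxx in vr.
rewrite last_rcons in l; subst x; rewrite rcons_path in p; case/andP: p => p ee.
exists (last r s) => //; apply/eqP; rewrite eqn_leq; apply/andP; split.
  by rewrite -sz size_rcons ltnS dist_min.
exact: dist_edge.
Qed.


Definition avoid u v := [rel x y | e x y && ~~ (((x == u) && (y == v)) || ((x == v) && (y == u)))].

Lemma bridge u v : e u v -> connect (avoid u v) v u -> False.
Proof.
move=> huv /connectP [s p l].
case: (shortenP p) l => s' p' u' _ l.
have sub : subrel (avoid u v) e by move=> x y /andP[].
apply: eacyc; exists (v :: s'); rewrite u' /=.
rewrite rcons_path (sub_path sub p') -l huv andbT.
case: s' p' u' l => [|a [|b s']] //=.
  by move=> _ _ vu; move: huv; rewrite vu eirr.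
by rewrite andbT => /andP[_] + _ au; rewrite -au !eqxx orbT.
Qed.

Definition low d := [rel x y | e x y && (dist x < d) && (dist y < d)].

Lemma low_sym d : symmetric (low d).
Proof. by move=> x y; rewrite /= esy andbAC. Qed.

Lemma connect_low d p : dist p < d -> connect (low d) r p.
Proof.
move=> pd; have: dist p <= dist p by [].
move: {2}(dist p) => n; elim: n p pd => [|n IH] p pd dp.
  by move: dp; rewrite leqn0 => /eqP/dist0 ->; rewrite connect0.
have [pr|pr] := eqVneq p r; first by rewrite pr connect0.
have [q eqp dq] := dist_par_ex pr.
apply: connect_trans (IH q _ _) (connect1 _).
- by apply: ltn_trans pd; rewrite -dq.
- by rewrite -ltnS dq.
- by rewrite /= eqp pd (ltn_trans _ pd) // -dq.
Qed.

Lemma connect_low2 d p q : dist p < d -> dist q < d -> connect (low d) p q.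
Proof.
move=> hp hq; apply: connect_trans (connect_low hq).
by rewrite (sym_connect_sym (@low_sym d)) connect_low.
Qed.

Lemma low_avoid u v x y : low (dist v) x y -> avoid u v x y.
Proof.
move=> /andP[/andP[hxy hx] hy]; rewrite /= hxy /=.
apply/negP => /orP[] /andP[/eqP ex /eqP ey].
  by move: hy; rewrite ey ltnn.
by move: hx; rewrite ex ltnn.
Qed.

Lemma par_uniq p1 p2 v : e p1 v -> e p2 v -> dist p1 < dist v -> dist p2 < dist v -> p1 = p2.
Proof.
move=> h1 h2 d1 d2; apply/eqP/negP => /negP n12.
apply: (@bridge p1 v) => //.
have a1 : avoid p1 v v p2.
  rewrite /= esy h2 /=; apply/negP => /orP[/andP[/eqP vp _]|/andP[_ /eqP pp]].
    by move: h1; rewrite vp eirr.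
  by move: n12; rewrite pp eqxx.
apply: (connect_trans (connect1 (e:=avoid p1 v) a1) (connect_sub _ (connect_low2 d2 d1))) => x y hxy.
by apply: connect1; apply: low_avoid hxy.
Qed.

Lemma edge_dist_neq u v : e u v -> dist u != dist v.
Proof.
move=> huv; apply/eqP => duv.
have ur : u != r by apply/eqP => ur; move: duv huv; rewrite ur dist_r => /esym/dist0 ->; rewrite eirr.
have vr : v != r by apply/eqP => vr; move: duv huv; rewrite vr dist_r => /dist0 ->; rewrite eirr.
have [p ep dp] := dist_par_ex vr; have [q eq dq] := dist_par_ex ur.
apply: (@bridge u v) => //.
have a1 : avoid u v v p.
  rewrite /= esy ep /=; apply/negP => /orP[/andP[/eqP vu _]|/andP[_ /eqP pu]].
    by move: huv; rewrite vu eirr.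
  by move: dp; rewrite pu; lia.
have a2 : avoid u v q u.
  rewrite /= eq /=; apply/negP => /orP[/andP[/eqP qu _]|/andP[/eqP qv _]].
    by move: eq; rewrite qu eirr.
  by move: dq; rewrite qv; lia.
have hp : dist p < dist v by rewrite -dp.
have hq : dist q < dist v by rewrite -duv -dq.
apply: (connect_trans (connect1 (e:=avoid u v) a1) (connect_trans (connect_sub _ (connect_low2 hp hq)) (connect1 (e:=avoid u v) a2))) => x y hxy.
by apply: connect1; apply: low_avoid hxy.
Qed.

Definition par v := if [pick p | e p v && (dist p < dist v)] is Some p then p else r.

Lemma par_spec v : v != r -> e (par v) v /\ (dist (par v)).+1 = dist v.
Proof.
move=> vr; have [q eq dq] := dist_par_ex vr.
rewrite /par; case: pickP => [p /andP[ep dp]|H].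
  by rewrite (par_uniq ep eq dp) // -dq.
by move: (H q); rewrite eq -dq ltnSn.
Qed.

Lemma par_r : par r = r.
Proof. by rewrite /par; case: pickP => // p /andP[_]; rewrite dist_r. Qed.

Lemma dist_parE v : dist (par v) = (dist v).-1.
Proof.
have [->|vr] := eqVneq v r; first by rewrite par_r dist_r.
by have [_ <-] := par_spec vr.
Qed.

Lemma par_eq p v : e p v -> dist p < dist v -> par v = p.
Proof.
move=> ep dp; have vr : v != r by apply/eqP => vr; move: dp; rewrite vr dist_r.
have [e1 d1] := par_spec vr; apply: par_uniq e1 ep _ dp; by rewrite -d1.
Qed.

Lemma edgeE u v : e u v = ((v != r) && (par v == u)) || ((u != r) && (par u == v)).
Proof.
apply/idP/idP.
  move=> huv; have := edge_dist_neq huv; have h1 := dist_edge huv.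
  have h2 := dist_edge (etrans (esy v u) huv).
  rewrite neq_ltn => /orP[] hl.
    have vr : v != r by apply/eqP => vr; move: hl; rewrite vr dist_r.
    by rewrite vr (par_eq huv hl) eqxx.
  have ur : u != r by apply/eqP => ur; move: hl; rewrite ur dist_r.
  by rewrite ur (par_eq (etrans (esy v u) huv) hl) eqxx orbT.
case/orP => /andP[nr /eqP <-]; have [ee _] := par_spec nr => //.
by rewrite esy.
Qed.

Definition anc u w := (dist u <= dist w) && (iter (dist w - dist u) par w == u).

Lemma dist_iter k w : dist (iter k par w) = dist w - k.
Proof. by elim: k => [|k IH]; rewrite ?subn0 //= dist_parE IH subnS. Qed.

Lemma ancP u w : anc u w -> iter (dist w - dist u) par w = u.
Proof. by case/andP => _ /eqP. Qed.

Lemma anc_dist u w : anc u w -> dist u <= dist w.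
Proof. by case/andP. Qed.

Lemma anc_refl u : anc u u.
Proof. by rewrite /anc leqnn subnn /=. Qed.

Lemma anc_r w : anc r w.
Proof.
rewrite /anc dist_r subn0 leq0n /=; apply/eqP/dist0.
by rewrite dist_iter subnn.
Qed.

Lemma anc_par w : anc (par w) w.
Proof.
have [->|wr] := eqVneq w r; first by rewrite par_r anc_refl.
have [_ d] := par_spec wr; rewrite /anc -d leqnSn subSn // subnn /=.
by [].
Qed.

Lemma anc_chain u u' w : anc u w -> anc u' w -> dist u <= dist u' -> anc u u'.
Proof.
move=> h h' l; rewrite /anc l /=; have dw := anc_dist h'.
apply/eqP; rewrite -[X in iter _ _ X](ancP h') -iterD -[RHS](ancP h); congr iter; lia.
Qed.

Lemma anc_eq u u' w : anc u w -> anc u' w -> dist u = dist u' -> u = u'.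
Proof. by move=> h h' d; rewrite -(ancP h) -(ancP h') d. Qed.

Lemma anc_trans u v w : anc u v -> anc v w -> anc u w.
Proof.
move=> h1 h2; have l1 := anc_dist h1; have l2 := anc_dist h2.
rewrite /anc (leq_trans l1 l2) /=; apply/eqP.
rewrite -[RHS](ancP h1).
have -> : dist w - dist u = (dist v - dist u) + (dist w - dist v) by rewrite addnC addnBA // subnK.
by rewrite iterD (ancP h2).
Qed.

Lemma anc_antisym u w : anc u w -> anc w u -> u = w.
Proof.
move=> h1 h2; apply: (anc_eq h1 (anc_refl w)).
by apply/eqP; rewrite eqn_leq anc_dist ?anc_dist.
Qed.

Lemma anc_comp u u' w : anc u w -> anc u' w -> anc u u' || anc u' u.
Proof.
move=> h h'; case: (leqP (dist u) (dist u')) => l.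
  by rewrite (anc_chain h h' l).
by rewrite (anc_chain h' h (ltnW l)) orbT.
Qed.

Lemma anc_neq_dist u w : anc u w -> u != w -> dist u < dist w.
Proof.
move=> h n; rewrite ltn_neqAle anc_dist // andbT.
by apply: contra n => /eqP d; rewrite (anc_eq h (anc_refl w) d).
Qed.

Definition ct u w := iter (dist w - (dist u).+1) par w.

Lemma ct_spec u w : anc u w -> u != w ->
  [/\ par (ct u w) = u, ct u w != r, anc (ct u w) w & dist (ct u w) = (dist u).+1].
Proof.
move=> h n; have l := anc_neq_dist h n.
have dc : dist (ct u w) = (dist u).+1.
  by rewrite /ct dist_iter subKn.
split => //.
- by rewrite /ct -iterS subnSK // (ancP h).
- by apply/eqP => cr; move: dc; rewrite cr dist_r.
- by rewrite /anc dc l /ct eqxx.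
Qed.

Lemma ct_uniq u w c : anc c w -> par c = u -> c != r -> c = ct u w.
Proof.
move=> hc pc cr.
have hu : anc u w by rewrite -pc; apply: anc_trans hc; apply: anc_par.
have [_ d] := par_spec cr; rewrite pc in d.
have n : u != w by apply/eqP => uw; move: (anc_dist hc); rewrite -d uw ltnn.
have [_ _ h2 d2] := ct_spec hu n.
by apply: (anc_eq hc h2); rewrite d2 d.
Qed.

Definition isch u w := (w != r) && (par w == u).
Definition chs u := [set w | isch u w].
Definition leafb v := chs v == set0.

Lemma leaf_nch x w : leafb x -> ~~ isch x w.
Proof. move=> /eqP H; apply/negP => hw; have : w \in chs x by rewrite inE. by rewrite H inE. Qed.

Lemma leaf_anc x w : leafb x -> anc x w -> w = x.
Proof.
move=> l h; apply/eqP; apply/negPn/negP => n; rewrite eq_sym in n.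
have [p c _ _] := ct_spec h n.
by move: (leaf_nch (ct x w) l); rewrite /isch c p eqxx.
Qed.

Lemma leaf_below v : exists x, leafb x && anc v x.
Proof.
case: (arg_maxnP dist (anc_refl v)) => x hx hmax.
exists x; rewrite hx andbT; apply/eqP/setP => w; rewrite !inE.
apply/negP => /andP[wr /eqP pw].
have [_ d] := par_spec wr; rewrite pw in d.
have aw : anc v w by apply: anc_trans hx _; rewrite -pw anc_par.
by move: (hmax w aw); rewrite -d /= ltnn.
Qed.


Lemma isch_spec u c : isch u c -> [/\ anc u c, dist c = (dist u).+1, par c = u & c != r].
Proof.
case/andP => cr /eqP pc; have [_ d] := par_spec cr; rewrite pc in d.
by split => //; rewrite -pc anc_par.
Qed.


Lemma deg_eq v : deg e v = (#|chs v| + (v != r))%N.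
Proof.
have E : [set w | e v w] = chs v :|: [set w | isch w v].
  by apply/setP => w; rewrite !inE edgeE /isch.
rewrite /deg E cardsU.
have -> : chs v :&: [set w | isch w v] = set0.
  apply/setP => w; rewrite !inE; apply/negP => /andP[h1 h2].
  have [_ d1 _ _] := isch_spec h1; have [_ d2 _ _] := isch_spec h2; lia.
rewrite cards0 subn0; congr addn.
have [->|vr] := eqVneq v r.
  by apply/eqP; rewrite cards_eq0; apply/eqP/setP => w; rewrite !inE /isch eqxx.
by rewrite /= -(cards1 (par v)); apply: eq_card => w; rewrite !inE /isch vr /= eq_sym.
Qed.

Lemma bin_of : (#|V| = 1%N \/ (deg e r = 2%N /\ forall v, v != r -> deg e v = 1%N \/ deg e v = 3%N)) ->
  forall v, leafb v \/ #|chs v| = 2%N.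
Proof.
case=> [V1|[dr dv]] v.
  left; apply/eqP/setP => w; rewrite !inE /isch; apply/negP => /andP[wr _].
  have : (1 < #|V|)%N by apply/card_gt1P; exists w, r.
  by rewrite V1.
have [->|vr] := eqVneq v r; first by right; move: dr; rewrite deg_eq eqxx addn0.
case: (dv v vr) => D; rewrite deg_eq vr addn1 in D; case: D => D.
  by left; rewrite /leafb -cards_eq0 D.
by right.
Qed.

Hypothesis bin : forall v, leafb v \/ #|chs v| = 2.

Lemma two_ch v : ~~ leafb v -> exists c1 c2, [/\ c1 != c2, isch v c1 & isch v c2].
Proof.
case: (bin v) => [->//|/eqP/cards2P [x [y [nxy E]]]] _.
have hx : x \in chs v by rewrite E !inE eqxx.
have hy : y \in chs v by rewrite E !inE eqxx orbT.
by exists x, y; rewrite inE in hx; rewrite inE in hy.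
Qed.

Lemma sib_eq u c c' y : isch u c -> isch u c' -> anc c y -> anc c' y -> c = c'.
Proof.
move=> h h' a a'; have [_ d _ _] := isch_spec h; have [_ d' _ _] := isch_spec h'.
by apply: (anc_eq a a'); rewrite d d'.
Qed.

Lemma ct_isch u w : anc u w -> u != w -> isch u (ct u w).
Proof. by move=> h n; have [p c _ _] := ct_spec h n; rewrite /isch c p eqxx. Qed.

Lemma leaf_neq_internal x v : leafb x -> ~~ leafb v -> x != v.
Proof. by move=> lx lv; apply: contraNneq lv => <-. Qed.

Definition X := {x : V | leafb x}.
Definition lv v : {set X} := [set x : X | anc v (val x)].

Lemma lv_r : lv r = setT.
Proof. by apply/setP => x; rewrite !inE anc_r. Qed.

Lemma lv_n0 v : exists x, x \in lv v.
Proof.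
have [x /andP[lx ax]] := leaf_below v.
by exists (exist _ x lx); rewrite inE.
Qed.

Lemma lv_leaf v x y : leafb v -> x \in lv v -> y \in lv v -> x = y.
Proof.
move=> l; rewrite !inE => /(leaf_anc l) hx /(leaf_anc l) hy.
by apply: val_inj; rewrite hx hy.
Qed.

Lemma lv_gt1 v : ~~ leafb v -> 1 < #|lv v|.
Proof.
move=> nl; have [c1 [c2 [n12 h1 h2]]] := two_ch nl.
have [x hx] := lv_n0 c1; have [y hy] := lv_n0 c2.
move: hx hy; rewrite !inE => hx hy.
have [a1 _ _ _] := isch_spec h1; have [a2 _ _ _] := isch_spec h2.
apply/card_gt1P; exists x, y; rewrite !inE (anc_trans a1 hx) (anc_trans a2 hy); split => //.
apply: contra n12 => /eqP xy; rewrite -xy in hy.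
by apply/eqP; apply: (sib_eq h1 h2 hx hy).
Qed.

Lemma lv_sub_strict u w : anc u w -> u != w -> exists2 x, x \in lv u & x \notin lv w.
Proof.
move=> h n; have c := ct_isch h n.
have nl : ~~ leafb u by apply/negP => l; move: (leaf_nch (ct u w) l); rewrite c.
have [c1 [c2 [n12 h1 h2]]] := two_ch nl.
have [c' [hc' nc']] : exists c', isch u c' /\ c' != ct u w.
  have [e1|e1] := eqVneq c1 (ct u w).
    by exists c2; split => //; rewrite -e1 eq_sym.
  by exists c1.
have [x hx] := lv_n0 c'; move: hx; rewrite inE => hx.
have [a' _ _ _] := isch_spec hc'.
exists x; first by rewrite inE (anc_trans a' hx).
rewrite inE; apply/negP => hw.
have [_ _ ac _] := ct_spec h n.
by move/eqP: nc'; apply; apply: (sib_eq hc' c hx (anc_trans ac hw)).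
Qed.

Lemma lv_inj : injective lv.
Proof.
move=> u w E; have [x hx] := lv_n0 u.
have hw : x \in lv w by rewrite -E.
move: hx hw; rewrite !inE => hx hw.
case/orP: (anc_comp hx hw) => a.
  apply/eqP; apply/negP => /negP n; have [y hy ny] := lv_sub_strict a n.
  by move: ny; rewrite -E hy.
apply/eqP; rewrite eq_sym; apply/negP => /negP n; have [y hy ny] := lv_sub_strict a n.
by move: ny; rewrite E hy.
Qed.

Definition lca x y := [arg max_(u > r | anc u x && anc u y) dist u].

Lemma lcaP x y : [/\ anc (lca x y) x, anc (lca x y) y &
  forall u, anc u x -> anc u y -> anc u (lca x y)].
Proof.
have P0 : anc r x && anc r y by rewrite !anc_r.
rewrite /lca; case: (@arg_maxnP _ r (fun u => anc u x && anc u y) dist P0).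
move=> m /andP[mx my] H; split => // u ux uy.
by apply: (anc_chain ux mx); apply: H; rewrite ux uy.
Qed.

Lemma lca_uniq x y m : anc m x -> anc m y -> (forall u, anc u x -> anc u y -> anc u m) ->
  lca x y = m.
Proof.
move=> mx my H; have [lx ly Hl] := lcaP x y.
by apply: anc_antisym; [apply: H | apply: Hl].
Qed.

Lemma lca_sym x y : lca x y = lca y x.
Proof.
have [lx ly Hl] := lcaP y x.
by apply: lca_uniq => // u ux uy; apply: Hl.
Qed.

Lemma lca_split u a b c c' : isch u c -> isch u c' -> c != c' -> anc c a -> anc c' b ->
  lca a b = u.
Proof.
move=> h h' n ca cb; have [uc _ _ _] := isch_spec h; have [uc' _ _ _] := isch_spec h'.
have ua := anc_trans uc ca; have ub := anc_trans uc' cb.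
apply: lca_uniq => // w wa wb.
case/orP: (anc_comp wa ua) => // a1.
have [->|nw] := eqVneq u w; first exact: anc_refl.
have cw := ct_isch a1 nw; have [_ _ aw _] := ct_spec a1 nw.
have e1 := sib_eq cw h (anc_trans aw wa) ca.
have e2 := sib_eq cw h' (anc_trans aw wb) cb.
by move: n; rewrite -e1 -e2 eqxx.
Qed.

Lemma lca_leaf_internal x y : leafb x -> x != y -> ~~ leafb (lca x y).
Proof.
move=> lx n; have [ax ay _] := lcaP x y; apply/negP => l.
have E1 := leaf_anc l ax; have E2 := leaf_anc l ay.
by move: n; rewrite -E1 in E2; rewrite E2 eqxx.
Qed.


Section Metric.
Variable R : realType.
Local Open Scope ring_scope.

Definition sd u := #|[set w | anc u w]|.
Definition h u : R := ((sd u * #|V| + enum_rank u)%N)%:R.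

Lemma sd_lt u w : anc u w -> u != w -> (sd w < sd u)%N.
Proof.
move=> a n; apply: proper_card; apply/properP; split.
  by apply/subsetP => z; rewrite !inE => hz; apply: anc_trans a hz.
exists u; rewrite !inE ?anc_refl //; apply/negP => wu.
by move: n; rewrite (anc_antisym a wu) eqxx.
Qed.

Lemma h_lt u w : anc u w -> u != w -> h w < h u.
Proof.
move=> a n; rewrite /h ltr_nat; have l := sd_lt a n.
have i1 := ltn_ord (enum_rank w).
set N := #|V| in i1 *; set i := nat_of_ord (enum_rank w) in i1 *.
set j := nat_of_ord (enum_rank u). nia.
Qed.

Lemma h_le u w : anc u w -> h w <= h u.
Proof.
move=> a; have [->|n] := eqVneq u w; first by [].
by apply: ltW; apply: h_lt.
Qed.

Lemma h_pos u : 0 < h u.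
Proof.
rewrite /h ltr0n; have : (0 < sd u)%N by apply/card_gt0P; exists u; rewrite inE anc_refl.
have : (0 < #|V|)%N by apply/card_gt0P; exists u.
nia.
Qed.

Lemma h_inj u w : h u = h w -> u = w.
Proof.
move/eqP; rewrite /h eqr_nat => /eqP E.
have := congr1 (modn^~ #|V|) E; rewrite !modnMDl !modn_small ?ltn_ord // => E2.
by apply: enum_rank_inj; apply: val_inj.
Qed.

Definition dX (x y : X) : R := if x == y then 0 else h (lca (val x) (val y)).

Lemma dX_ge0 x y : 0 <= dX x y.
Proof. by rewrite /dX; case: eqP => // _; apply: ltW; apply: h_pos. Qed.

Lemma dX_ultra : is_ultrametric dX.
Proof.
split.
- exact: dX_ge0.
- move=> x y; rewrite /dX; case: eqP => // n; split => // H.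
  by move: (h_pos (lca (val x) (val y))); rewrite H ltxx.
- by move=> x y; rewrite /dX eq_sym lca_sym.
- move=> x y z.
  have [->|nxz] := eqVneq x z; first by rewrite {1}/dX eqxx le_max dX_ge0.
  rewrite /dX (negbTE nxz).
  have [exy|nxy] := eqVneq x y; first by rewrite -exy ?(negbTE nxz) le_max lexx orbT.
  have [eyz|nyz] := eqVneq y z; first by rewrite -eyz le_max lexx.
  have [a1 a2 _] := lcaP (val x) (val y); have [b1 b2 _] := lcaP (val y) (val z).
  have [_ _ H] := lcaP (val x) (val z).
  rewrite le_max; case/orP: (anc_comp a2 b1) => ab.
    by apply/orP; left; apply: h_le; apply: H => //; apply: anc_trans ab b2.
  by apply/orP; right; apply: h_le; apply: H => //; apply: anc_trans ab a1.
Qed.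

Lemma dX_child v c x y : isch v c -> x \in lv c -> y \in lv c -> dX x y < h v.
Proof.
move=> hc; rewrite !inE => hx hy; rewrite /dX; case: eqP => _; first exact: h_pos.
have [_ _ H] := lcaP (val x) (val y); have [_ _ pc cr] := isch_spec hc.
apply: le_lt_trans (h_le (H _ hx hy)) _.
have [a _ _ _] := isch_spec hc; apply: h_lt a _.
by apply/eqP => vc; move: (isch_spec hc) => [_ d _ _]; move: d; rewrite vc; lia.
Qed.

Lemma dX_split v c1 c2 x y : isch v c1 -> isch v c2 -> c1 != c2 ->
  x \in lv c1 -> y \in lv c2 -> dX x y = h v.
Proof.
move=> h1 h2 n; rewrite !inE => hx hy; rewrite /dX; case: eqP => [xy|_].
  by move: n; rewrite (sib_eq h1 h2 hx (_ : anc c2 (val x))) ?eqxx // xy.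
by rewrite (lca_split h1 h2 n hx hy).
Qed.

Lemma diam_lv v : ~~ leafb v -> diam dX (lv v) = h v.
Proof.
move=> nl; apply/le_anti/andP; split.
  apply/bigmax_leP; split; first exact: ltW (h_pos v).
  move=> [x y]; rewrite inE /= !inE => /andP[hx hy].
  rewrite /dX; case: eqP => _; first exact: ltW (h_pos v).
  by have [_ _ H] := lcaP (val x) (val y); apply: h_le; apply: H.
have [c1 [c2 [n12 h1 h2]]] := two_ch nl.
have [x hx] := lv_n0 c1; have [y hy] := lv_n0 c2.
have [a1 _ _ _] := isch_spec h1; have [a2 _ _ _] := isch_spec h2.
have P : (x, y) \in setX (lv v) (lv v).
  by move: hx hy; rewrite !inE /= => hx hy; rewrite (anc_trans a1 hx) (anc_trans a2 hy).
by rewrite -(dX_split h1 h2 n12 hx hy); apply: (le_bigmax_cond _ (fun p => dX p.1 p.2) P).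
Qed.

Lemma class_lv v x : ~~ leafb v -> x \in lv v ->
  [set y in lv v | dX x y < diam dX (lv v)] = lv (ct v (val x)).
Proof.
move=> nl hx; have ax : anc v (val x) by move: hx; rewrite inE.
have nvx : v != val x by rewrite eq_sym; apply: leaf_neq_internal nl; exact: valP.
have hc := ct_isch ax nvx; have [_ _ cx _] := ct_spec ax nvx.
have [avc _ _ _] := isch_spec hc.
rewrite diam_lv //; apply/setP => y; rewrite !inE.
have [cy|ncy] := boolP (anc (ct v (val x)) (val y)).
  rewrite (anc_trans avc cy) /=; apply: (dX_child hc); by rewrite inE.
apply/negbTE; apply/negP => /andP[vy lt].
have nxy : x != y by apply: contraNneq ncy => <-.
have nvy : v != val y by rewrite eq_sym; apply: leaf_neq_internal nl; exact: valP.
have hc' := ct_isch vy nvy; have [_ _ cy' _] := ct_spec vy nvy.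
have n' : ct v (val x) != ct v (val y) by apply: contraNneq ncy => ->.
by move: lt; rewrite (dX_split hc hc' n') ?inE // ltxx.
Qed.

Lemma rt_child_ex u C : rt_child dX (lv u) C -> exists2 w, C = lv w & isch u w.
Proof.
case/andP => gt1 /existsP [x /andP[hx /eqP E]].
have nl : ~~ leafb u.
  apply/negP => l; move/card_gt1P: gt1 => [a [b [ha hb nab]]].
  by move: nab; rewrite (lv_leaf l ha hb) eqxx.
rewrite E class_lv //; exists (ct u (val x)) => //.
have ax : anc u (val x) by move: hx; rewrite inE.
apply: ct_isch ax _; rewrite eq_sym; apply: leaf_neq_internal nl; exact: valP.
Qed.

Lemma rt_child_lv u w : rt_child dX (lv u) (lv w) = isch u w.
Proof.
apply/idP/idP.
  by case/rt_child_ex => w' /lv_inj ->.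
move=> hw; have nl : ~~ leafb u by apply/negP => l; move: (leaf_nch w l); rewrite hw.
rewrite /rt_child lv_gt1 //=; have [x hx] := lv_n0 w.
have [a _ pc cr] := isch_spec hw.
apply/existsP; exists x; rewrite inE (anc_trans a (_ : anc w (val x))) ?(hx : _) /=.
  rewrite class_lv ?inE ?(anc_trans a (_ : anc w (val x))) //; try by move: hx; rewrite inE.
  by rewrite -(@ct_uniq u (val x) w) //; move: hx; rewrite inE.
by move: hx; rewrite inE.
Qed.

Lemma rt_node_lv v : rt_node dX (lv v).
Proof.
have: (dist v <= dist v)%N by [].
move: {2}(dist v) => n; elim: n v => [|n IH] v dv.
  by move: dv; rewrite leqn0 => /eqP/dist0 ->; rewrite /rt_node lv_r connect0.
have [->|vr] := eqVneq v r; first by rewrite /rt_node lv_r connect0.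
have [_ d] := par_spec vr.
apply: connect_trans (IH (par v) _) (connect1 _); first by rewrite -ltnS d.
by rewrite rt_child_lv /isch vr eqxx.
Qed.

Lemma rt_nodeP B : rt_node dX B <-> exists v, lv v = B.
Proof.
split; last by case=> v <-; apply: rt_node_lv.
case/connectP => p; have : exists u, lv u = setT by exists r; rewrite lv_r.
elim: p setT => [|C p IH] S [u <-] /=; first by move=> _ ->; exists u.
case/andP => /rt_child_ex [w -> _] hp E; apply: (IH (lv w)) hp E; by exists w.
Qed.

Lemma edge_lv u w : e u w = rt_edge dX (lv u) (lv w).
Proof. by rewrite /rt_edge !rt_child_lv edgeE /isch. Qed.

Lemma Sp_perm : perm_eq (Sp dX) [seq h v | v <- enum [pred v | ~~ leafb v]].
Proof.
apply: uniq_perm; first exact: undup_uniq.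
  by rewrite (map_inj_uniq (@h_inj)) enum_uniq.
move=> z; rewrite mem_undup; apply/mapP/mapP.
  case=> [[x y]]; rewrite mem_enum /= => nxy ->.
  exists (lca (val x) (val y)); last by rewrite /dX (negbTE nxy).
  rewrite mem_enum inE; apply: lca_leaf_internal; first exact: valP.
  by apply: contra nxy => /eqP/val_inj ->.
case=> v; rewrite mem_enum inE => nl ->.
have [c1 [c2 [n12 h1 h2]]] := two_ch nl.
have [x hx] := lv_n0 c1; have [y hy] := lv_n0 c2.
exists (x, y); last by rewrite /= (dX_split h1 h2 n12 hx hy).
rewrite mem_enum inE /=; apply/eqP => xy; move: hy; rewrite -xy => hy.
by move: n12; move: hx hy; rewrite !inE => hx hy; rewrite (sib_eq h1 h2 hx hy) eqxx.
Qed.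

Lemma Sp_size : size (Sp dX) = #|[pred v | ~~ leafb v]|.
Proof. by rewrite (perm_size Sp_perm) size_map -cardE. Qed.

End Metric.

Lemma count_int : #|[pred v | ~~ leafb v]| = (#|{: X}| - 1)%N.
Proof.
have E1 : #|predC1 r| = (\sum_v #|chs v|)%N.
  rewrite -sum1_card (partition_big par predT) //=; apply: eq_bigr => v _.
  by rewrite sum1dep_card; apply: eq_card => w; rewrite !inE.
have E2 : (\sum_v #|chs v|)%N = (#|[pred v | ~~ leafb v]| * 2)%N.
  rewrite -sum_nat_const [RHS]big_mkcond /=; apply: eq_bigr => v _; rewrite inE.
  case: (bin v) => [l|c2]; first by rewrite l /=; apply/eqP; rewrite cards_eq0.
  by rewrite /leafb -cards_eq0 c2.
have E3 : #|V| = (#|[pred v | leafb v]| + #|[pred v | ~~ leafb v]|)%N.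
  by rewrite -(cardC [pred v | leafb v]); congr addn; apply: eq_card => v; rewrite !inE.
rewrite card_sig; move: E1 E2 E3; rewrite cardC1 -subn1.
move: (#|V|) (\sum_v #|chs v|) (#|[pred v | leafb v]|) (#|[pred v | ~~ leafb v]|); lia.
Qed.

Lemma final (R : realType) : in_U (@dX R) /\ iso_rep_tree e (@dX R).
Proof.
split.
  split; first exact: dX_ultra.
    have [x /andP[lx _]] := leaf_below r.
    by apply/card_gt0P; exists (exist _ x lx).
  by rewrite Sp_size count_int.
exists lv; split.
- exact: lv_inj.
- move=> B; exact: rt_nodeP.
- move=> u w; exact: edge_lv.
Qed.

End TreeFacts.

Theorem lemma18 (R : realType) (V : finType) (e : rel V) (r : V) :
  strictly_binary_tree e r ->
  exists (X : finType) (d : X -> X -> R), in_U d /\ iso_rep_tree e d.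
Proof.
case=> [[[esy eirr] econ eacyc] Hb].
have bin := bin_of esy eirr econ eacyc Hb.
have := @final V e r esy eirr econ eacyc bin R.
by move=> H; eexists; eexists; exact: H.
Qed.
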